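(* Let $G$ be a group with the unique root property. Suppose that for infinitely many primes $p$ there exist a normal subgroup $H$ of index $p$ in $G$ and an automorphism of $H$ that does not extend to an automorphism of $G$. Then the abstract commensurator $\mathrm{Comm}(G)$ is not finitely generated.
   Context: A group $G$ has the unique root property if for all $x,y\in G$ and every positive integer $n$, $x^n=y^n$ implies $x=y$. The abstract commensurator $\mathrm{Comm}(G)$ is the group of equivalence classes of isomorphisms between finite-index subgroups of $G$, two such isomorphisms being equivalent if they agree on some finite-index subgroup of $G$ on which both are defined; the product of $\alpha:G_1\to G_1'$ and $\beta:G_2\to G_2'$ is $\alpha\beta:\alpha^{-1}(G_1'\cap G_2)\to\beta(G_1'\cap G_2)$. *)

(* Defs.v *)
From Stdlib Require List.
From mathcomp Require Import all_boot.
Set Implicit Arguments.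
Unset Strict Implicit.
Unset Printing Implicit Defensive.

Record group := Group {
  carrier :> Type;
  gmul : carrier -> carrier -> carrier;
  gone : carrier;
  ginv : carrier -> carrier;
  gmulA : forall x y z, gmul x (gmul y z) = gmul (gmul x y) z;
  gmul1g : forall x, gmul gone x = x;
  gmulg1 : forall x, gmul x gone = x;
  gmulVg : forall x, gmul (ginv x) x = gone;
  gmulgV : forall x, gmul x (ginv x) = gone
}.

Section Defs.
Variable G : group.

Local Notation "x * y" := (gmul x y).
Local Notation "x ^-1" := (ginv x).

Fixpoint gpow (x : G) (n : nat) : G :=
  match n with 0 => gone G | S m => x * gpow x m end.

Definition unique_root_property : Prop :=
  forall (x y : G) (n : nat), 0 < n -> gpow x n = gpow y n -> x = y.

Definition is_subgroup (H : G -> Prop) : Prop :=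
  H (gone G) /\ (forall x y, H x -> H y -> H (x * y)) /\ (forall x, H x -> H (x^-1)).

Definition is_normal (H : G -> Prop) : Prop :=
  is_subgroup H /\ forall g h, H h -> H (g^-1 * h * g).

(* H has index n in G: there are n left-coset representatives r 0 .. r (n-1)
   such that every g lies in exactly one coset (r i) H *)
Definition has_index (H : G -> Prop) (n : nat) : Prop :=
  exists r : nat -> G, forall g, exists! i, i < n /\ H ((r i)^-1 * g).

Definition finite_index_subgroup (H : G -> Prop) : Prop :=
  is_subgroup H /\ exists n, has_index H n.

Definition hom_on (H : G -> Prop) (f : G -> G) : Prop :=
  forall x y, H x -> H y -> f (x * y) = f x * f y.

Definition is_aut_of_sub (H : G -> Prop) (f : G -> G) : Prop :=
  (forall x, H x -> H (f x)) /\ hom_on H f /\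
  (forall x y, H x -> H y -> f x = f y -> x = y) /\
  (forall y, H y -> exists x, H x /\ f x = y).

Definition is_aut (f : G -> G) : Prop :=
  hom_on (fun _ => True) f /\ injective f /\ (forall y, exists x, f x = y).

(* Raw partial maps: a domain, a codomain, and a function (meaningful on dom). *)
Record pmap := PMap { pdom : G -> Prop; pcod : G -> Prop; pfun : G -> G }.

(* isomorphism between finite-index subgroups: an element representing a
   class of Comm(G) *)
Definition is_commensuration (a : pmap) : Prop :=
  finite_index_subgroup (pdom a) /\ finite_index_subgroup (pcod a) /\
  hom_on (pdom a) (pfun a) /\
  (forall x y, pdom a x -> pdom a y -> pfun a x = pfun a y -> x = y) /\
  (forall x, pdom a x -> pcod a (pfun a x)) /\
  (forall y, pcod a y -> exists x, pdom a x /\ pfun a x = y).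

Definition comm_equiv (a b : pmap) : Prop :=
  exists K : G -> Prop, finite_index_subgroup K /\
    (forall x, K x -> pdom a x /\ pdom b x /\ pfun a x = pfun b x).

Definition comm_id : pmap := PMap (fun _ => True) (fun _ => True) (fun x => x).

Definition comm_mul (a b : pmap) : pmap :=
  PMap (fun x => pdom a x /\ pcod a (pfun a x) /\ pdom b (pfun a x))
       (fun y => exists x, pdom a x /\ pcod a (pfun a x) /\ pdom b (pfun a x)
                           /\ pfun b (pfun a x) = y)
       (fun x => pfun b (pfun a x)).

(* the set of commensurations whose class lies in the subgroup of Comm(G)
   generated by the classes of the elements of S *)
Inductive comm_generated (S : seq pmap) : pmap -> Prop :=
  | cg_base a : List.In a S -> comm_generated S a
  | cg_one : comm_generated S comm_id
  | cg_mul a b : comm_generated S a -> comm_generated S b ->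
      comm_generated S (comm_mul a b)
  | cg_inv a b : comm_generated S a -> is_commensuration b ->
      comm_equiv (comm_mul a b) comm_id -> comm_generated S b
  | cg_equiv a b : comm_generated S a -> is_commensuration b ->
      comm_equiv a b -> comm_generated S b.

Definition comm_finitely_generated : Prop :=
  exists S : seq pmap, (forall a, List.In a S -> is_commensuration a) /\
    forall c, is_commensuration c -> comm_generated S c.

End Defs.

(* Main.v *)
Require Import Defs.
From mathcomp Require Import all_boot.
From mathcomp Require all_fingroup.
From mathcomp Require Import zify.
From Stdlib Require Import IndefiniteDescription Classical_Prop.
Set Implicit Arguments. Unset Strict Implicit. Unset Printing Implicit Defensive.

Module LagM.
Import all_fingroup.
Local Open Scope group_scope.

Lemma semireg_order n (s : {perm 'I_n}) (x0 : 'I_n) :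
  (forall k x y, iter k s x = x -> iter k s y = y) -> iter n s x0 = x0.
Proof.
move=> Hreg.
set A := <[s]>%G.
have stab1 : forall x, 'C_A[x | 'P] = 1.
  move=> x; apply/trivgP/subsetP => t /setIP [tA /astab1P Ht].
  case/cycleP: tA => k Hk; subst t.
  move: Ht; rewrite /= ?apermE permX => Ht.
  rewrite inE; apply/eqP/permP => y; rewrite perm1 permX.
  exact: Hreg Ht.
have corb : forall x, #|orbit 'P A x| = #|A|.
  by move=> x; rewrite card_orbit stab1 indexg1.
have actT : [acts A, on [set: 'I_n] | 'P].
  by apply/actsP => a _ x; rewrite !inE.
have Hsum := acts_sum_card_orbit actT.
have Hdiv : (#|A| %| n)%N.
  rewrite -[X in (_ %| X)%N](card_ord n) -cardsT -Hsum.
  rewrite (eq_bigr (fun _ => #|A|)); last first.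
    by move=> T /imsetP [x _ ->]; rewrite corb.
  rewrite sum_nat_const.
exact: dvdn_mull.
have : s ^+ n = 1.
  by case/dvdnP: Hdiv => q Hq; rewrite [X in s ^+ X]Hq mulnC expgM expg_order expg1n.
by move/(congr1 (fun t : {perm 'I_n} => t x0)); rewrite permX perm1.
Qed.

Lemma semireg_fun n (f : 'I_n -> 'I_n) (finj : injective f) (x0 : 'I_n) :
  (forall k x y, iter k f x = x -> iter k f y = y) -> iter n f x0 = x0.
Proof.
have It : forall k x, iter k (perm finj) x = iter k f x.
  by elim=> [|k IH] x //=; rewrite IH permE.
move=> Hreg; rewrite -It; apply: semireg_order => k x y; rewrite !It; exact: Hreg.
Qed.
End LagM.
Import LagM.

Section Basics.
Variable G : group.
Local Notation "x ** y" := (gmul x y) (at level 40, left associativity).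
Local Notation iv := (@ginv G).
Local Notation e := (gone G).
Implicit Types x y z a h : G.

Lemma mulA x y z : x ** (y ** z) = x ** y ** z. Proof. exact: gmulA. Qed.
Lemma mul1 x : e ** x = x. Proof. exact: gmul1g. Qed.
Lemma mulr1 x : x ** e = x. Proof. exact: gmulg1. Qed.
Lemma mulV x : iv x ** x = e. Proof. exact: gmulVg. Qed.
Lemma mulRV x : x ** iv x = e. Proof. exact: gmulgV. Qed.
Lemma mulKg x y : iv x ** (x ** y) = y. Proof. by rewrite mulA mulV mul1. Qed.
Lemma mulKVg x y : x ** (iv x ** y) = y. Proof. by rewrite mulA mulRV mul1. Qed.
Lemma mulgK x y : y ** x ** iv x = y. Proof. by rewrite -mulA mulRV mulr1. Qed.
Lemma mulgKV x y : y ** iv x ** x = y. Proof. by rewrite -mulA mulV mulr1. Qed.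
Lemma mulIl x y z : x ** y = x ** z -> y = z.
Proof. by move=> H; rewrite -(mulKg x y) H mulKg. Qed.
Lemma mulIr x y z : y ** x = z ** x -> y = z.
Proof. by move=> H; rewrite -(mulgK x y) H mulgK. Qed.
Lemma inv_uniq x y : x ** y = e -> y = iv x.
Proof. by move=> H; apply: (@mulIl x); rewrite H mulRV. Qed.
Lemma invK x : iv (iv x) = x.
Proof. by symmetry; apply: inv_uniq; rewrite mulV. Qed.
Lemma invM x y : iv (x ** y) = iv y ** iv x.
Proof. by symmetry; apply: inv_uniq; rewrite -mulA (mulA y) mulRV mul1 mulRV. Qed.
Lemma inv1 : iv e = e.
Proof. by symmetry; apply: inv_uniq; rewrite mul1. Qed.

Lemma gpowS x n : gpow x n.+1 = x ** gpow x n. Proof. by []. Qed.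
Lemma gpow0 x : gpow x 0 = e. Proof. by []. Qed.
Lemma gpow1 x : gpow x 1 = x. Proof. by rewrite gpowS mulr1. Qed.
Lemma gpowD x m n : gpow x (m + n) = gpow x m ** gpow x n.
Proof. by elim: m => [|m IH]; rewrite ?mul1 // addSn !gpowS IH mulA. Qed.
Lemma gpowSr x n : gpow x n.+1 = gpow x n ** x.
Proof. by rewrite -addn1 gpowD gpow1. Qed.
Lemma gpowM x m n : gpow x (m * n) = gpow (gpow x m) n.
Proof. by elim: n => [|n IH]; rewrite ?muln0 // mulnS gpowD IH. Qed.
Lemma gpow_e n : gpow e n = e.
Proof. by elim: n => // n IH; rewrite gpowS IH mul1. Qed.
Lemma comm_pow x n : x ** gpow x n = gpow x n ** x.
Proof. by rewrite -gpowS gpowSr. Qed.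
Lemma inv_pow x n : gpow (iv x) n = iv (gpow x n).
Proof.
elim: n => [|n IH]; first by rewrite inv1.
by rewrite gpowS IH gpowSr invM.
Qed.
Lemma conj_pow a h n : gpow (iv a ** h ** a) n = iv a ** gpow h n ** a.
Proof.
elim: n => [|n IH]; first by rewrite /= mulr1 mulV.
by rewrite gpowS IH -!mulA mulKVg.
Qed.

Lemma sub1 A : is_subgroup A -> A e. Proof. by case. Qed.
Lemma subM A x y : is_subgroup A -> A x -> A y -> A (x ** y).
Proof. by case=> _ [H _]; apply: H. Qed.
Lemma subV A x : is_subgroup A -> A x -> A (iv x).
Proof. by case=> _ [_ H]; apply: H. Qed.
Lemma subX A x n : is_subgroup A -> A x -> A (gpow x n).
Proof. move=> sA Ax; elim: n => [|n IH]; [exact: sub1 | exact: subM]. Qed.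

Lemma hom1 A f : is_subgroup A -> hom_on A f -> f e = e.
Proof.
move=> sA hf; apply: (@mulIl (f e)); rewrite mulr1 -hf ?mul1 //; exact: sub1.
Qed.
Lemma homV A f x : is_subgroup A -> hom_on A f -> A x -> f (iv x) = iv (f x).
Proof.
move=> sA hf Ax; apply: inv_uniq; rewrite -hf ?mulRV; [exact: hom1 sA hf|done|exact: subV].
Qed.
Lemma homX A f x n : is_subgroup A -> hom_on A f -> A x -> f (gpow x n) = gpow (f x) n.
Proof.
move=> sA hf Ax; elim: n => [|n IH]; first exact: hom1 sA hf.
by rewrite !gpowS hf ?IH //; apply: subX.
Qed.

Lemma bezout m p : 0 < m -> coprime m p -> exists u v, u * m = v * p + 1.
Proof.
move=> m0 cop; case: (egcdnP p m0) => km kn E _.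
by exists km, kn; rewrite E (eqP cop).
Qed.

Lemma decomp A B g m q : is_subgroup A -> is_subgroup B -> 0 < m -> coprime m q ->
  A (gpow g m) -> B (gpow g q) -> exists a b, A a /\ B b /\ g = a ** b.
Proof.
move=> sA sB m0 cop Am Bq; have [u [v E]] := bezout m0 cop.
exists (gpow (gpow g m) u), (iv (gpow (gpow g q) v)); split; first exact: subX.
split; first by apply: subV => //; apply: subX.
by rewrite -!gpowM (mulnC m) E (mulnC q) addn1 gpowS mulgK.
Qed.

End Basics.
Lemma pigeon n (f : nat -> nat) : (forall i, f i < n) ->
  exists i j, i < j <= n /\ f i = f j.
Proof.
move=> Hf.
pose F (i : 'I_n.+1) : 'I_n := Ordinal (Hf i).
case: (boolP (injectiveb F)) => [/injectiveP Finj | /injectivePn [x [y Hxy HF]]].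
  by have := leq_card F Finj; rewrite !card_ord ltnn.
have HF' : f x = f y by have := congr1 val HF.
case: (ltngtP x y) => Hc.
- by exists x, y; rewrite Hc -ltnS ltn_ord.
- by exists y, x; rewrite Hc -ltnS ltn_ord.
- by move: Hxy; rewrite (val_inj Hc) eqxx.
Qed.

Section Cosets.
Variable G : group.
Local Notation "x ** y" := (gmul x y) (at level 40, left associativity).
Local Notation iv := (@ginv G).
Local Notation e := (gone G).

Lemma coset_fun (K : G -> Prop) n : is_subgroup K -> has_index K n ->
  exists (c : G -> nat) (r : nat -> G),
  (forall x, c x < n) /\ (forall i, i < n -> c (r i) = i) /\
  (forall x y, c x = c y <-> K (iv x ** y)).
Proof.
move=> sK [r Hx].
have Hc : forall x, {i | i < n /\ K (iv (r i) ** x)}.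
  move=> x; apply: constructive_indefinite_description.
  by case: (Hx x) => i [Hi _]; exists i.
have uniq : forall x j, j < n -> K (iv (r j) ** x) -> sval (Hc x) = j.
  move=> x j jn Kj; case: (Hx x) => i [_ Hu].
  by rewrite -(Hu j (conj jn Kj)) -(Hu _ (proj2_sig (Hc x))).
exists (fun x => sval (Hc x)), r; split; first by move=> x; case: (proj2_sig (Hc x)).
split.
  by move=> i ilt; apply: uniq => //; rewrite mulV; apply: sub1.
move=> x y; split.
  move=> E; case: (proj2_sig (Hc x)) => _ Kx; case: (proj2_sig (Hc y)) => _ Ky.
  rewrite E in Kx.
  have := subM sK (subV sK Kx) Ky.
  by rewrite invM invK -mulA mulKVg.
move=> Kxy; symmetry; apply: uniq; first by case: (proj2_sig (Hc x)).
case: (proj2_sig (Hc x)) => _ Kx.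
by have := subM sK Kx Kxy; rewrite -mulA mulKVg.
Qed.

Lemma fi_pow (K : G -> Prop) n g : is_subgroup K -> has_index K n ->
  exists m, 0 < m <= n /\ K (gpow g m).
Proof.
move=> sK hK; have [c [r [cb [_ cE]]]] := coset_fun sK hK.
have [i [j [/andP [ij jn] E]]] := pigeon (fun i => cb (gpow g i)).
exists (j - i); rewrite subn_gt0 ij /=; split.
  exact: leq_trans (leq_subr _ _) jn.
move/cE: E; rewrite -(subnKC (ltnW ij)) gpowD mulKg.
by rewrite addKn.
Qed.

Lemma normal_pow (H : G -> Prop) p g : is_normal H -> has_index H p -> H (gpow g p).
Proof.
case=> sH nH hH; have [c [r [cb [cr cE]]]] := coset_fun sH hH.
pose co x : 'I_p := Ordinal (cb x).
have co_eq : forall x y, co x = co y <-> H (iv x ** y).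
  move=> x y; split; first by move/(congr1 val) => /= /cE.
  by move/cE => E; apply: val_inj.
have sig_inj : injective (fun i : 'I_p => co (g ** r i)).
  move=> i j /co_eq; rewrite invM -mulA mulKg => /cE E.
  apply: val_inj; rewrite /= -(cr i (ltn_ord i)) -(cr j (ltn_ord j)); exact: E.
pose s := (fun i : 'I_p => co (g ** r i)).
have s_co : forall x, s (co x) = co (g ** x).
  move=> x; apply/co_eq; rewrite invM -mulA mulKg.
  by apply/cE; apply: cr.
have iter_co : forall k x, iter k s (co x) = co (gpow g k ** x).
  elim=> [|k IH] x /=; first by rewrite mul1.
  by rewrite IH s_co -mulA.
have co_r : forall i : 'I_p, co (r i) = i by move=> i; apply: val_inj; apply: cr.
have fix_iff : forall k x, iter k s (co x) = co x <-> H (gpow g k).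
  move=> k x; rewrite iter_co; split.
    move/esym/co_eq => Hc; have := nH (iv x) _ Hc.
    by rewrite invK !mulA mulRV mul1 mulgK.
  by move=> Hk; symmetry; apply/co_eq; rewrite mulA; apply: nH.
have := @semireg_fun p s sig_inj (co e).
rewrite fix_iff; apply => k x y; rewrite -(co_r x) -(co_r y) !fix_iff; done.
Qed.

End Cosets.

Section Main.
Variable G : group.
Variable p : nat.
Local Notation "x ** y" := (gmul x y) (at level 40, left associativity).
Local Notation iv := (@ginv G).
Local Notation e := (gone G).

Definition dense (A : G -> Prop) :=
  forall g, exists m, 0 < m /\ coprime m p /\ A (gpow g m).

Definition GoodData (A B : G -> Prop) (al be : G -> G) :=
  is_subgroup A /\ is_subgroup B /\ (forall x, A x -> B (al x)) /\
  (forall y, B y -> A (be y)) /\ (forall x, A x -> be (al x) = x) /\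
  (forall y, B y -> al (be y) = y) /\ hom_on A al /\ dense A /\ dense B.

Definition Good (a : Defs.pmap G) := exists A B al be, GoodData A B al be /\
  (forall x, A x -> pdom a x -> al x = pfun a x).

Lemma GoodData_inv A B al be : GoodData A B al be -> GoodData B A be al.
Proof.
case=> [sA [sB [mA [mB [K1 [K2 [hal [dA dB]]]]]]]].
do 6 (split; first done).
split; last by split.
move=> y1 y2 By1 By2.
rewrite -{1}(K2 y1 By1) -{1}(K2 y2 By2) -hal ?K1 //; try exact: mB.
exact: subM sA (mB _ By1) (mB _ By2).
Qed.

Lemma GoodData_hom_be A B al be : GoodData A B al be -> hom_on B be.
Proof. by move/GoodData_inv; case=> _ [_ [_ [_ [_ [_ [H _]]]]]]. Qed.

Lemma GoodData_comp A1 B1 al1 be1 A2 B2 al2 be2 :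
  GoodData A1 B1 al1 be1 -> GoodData A2 B2 al2 be2 ->
  GoodData (fun x => A1 x /\ A2 (al1 x)) (fun y => B2 y /\ B1 (be2 y))
           (fun x => al2 (al1 x)) (fun y => be1 (be2 y)).
Proof.
move=> D1 D2.
have hb1 := GoodData_hom_be D1; have hb2 := GoodData_hom_be D2.
case: D1 => [sA1 [sB1 [mA1 [mB1 [K11 [K21 [hal1 [dA1 dB1]]]]]]]].
case: D2 => [sA2 [sB2 [mA2 [mB2 [K12 [K22 [hal2 [dA2 dB2]]]]]]]].
split.
  split; first by split; [exact: sub1 | rewrite (hom1 sA1 hal1); exact: sub1].
  split.
    move=> x y [Ax Ax'] [Ay Ay']; split; first exact: subM.
    by rewrite hal1 //; apply: subM.
  move=> x [Ax Ax']; split; first exact: subV.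
  by rewrite (homV sA1 hal1) //; apply: subV.
split.
  split; first by split; [exact: sub1 | rewrite (hom1 sB2 hb2); exact: sub1].
  split.
    move=> x y [Ax Ax'] [Ay Ay']; split; first exact: subM.
    by rewrite hb2 //; apply: subM.
  move=> x [Ax Ax']; split; first exact: subV.
  by rewrite (homV sB2 hb2) //; apply: subV.
split.
  move=> x [Ax Ax']; split; first exact: mA2.
  by rewrite K12 //; apply: mA1.
split.
  move=> y [By By']; split; first exact: mB1.
  by rewrite K21 //; apply: mB2.
split; first by move=> x [Ax Ax']; rewrite K12 // K11.
split; first by move=> y [By By']; rewrite K21 // K22.
split.
  move=> x y [Ax Ax'] [Ay Ay']; rewrite hal1 // hal2 //.
split.
  move=> g; have [m1 [m10 [c1 A1m]]] := dA1 g.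
  have [m2 [m20 [c2 A2m]]] := dA2 (al1 (gpow g m1)).
  exists (m1 * m2); split; first by rewrite muln_gt0 m10.
  split; first by rewrite coprimeMl c1.
  rewrite gpowM; split; first exact: subX.
  by rewrite (homX _ sA1 hal1).
move=> g; have [m2 [m20 [c2 B2m]]] := dB2 g.
have [m1 [m10 [c1 B1m]]] := dB1 (be2 (gpow g m2)).
exists (m2 * m1); split; first by rewrite muln_gt0 m10 m20.
split; first by rewrite coprimeMl c1 c2.
rewrite gpowM; split; first exact: subX.
by rewrite (homX _ sB2 hb2).
Qed.

Hypothesis UR : unique_root_property G.

Lemma UR' (x y : G) m n : 0 < m -> 0 < n -> gpow (gpow x m) n = gpow (gpow y m) n -> x = y.
Proof.
move=> m0 n0; rewrite -!gpowM; apply: UR; by rewrite muln_gt0 m0.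
Qed.

Lemma Good_id : Good (comm_id G).
Proof.
exists (fun _ => True), (fun _ => True), id, id; split; last by [].
have sT : is_subgroup (fun _ : G => True) by [].
have dT : dense (fun _ : G => True) by move=> g; exists 1; rewrite coprime1n.
by do 8 (split => //).
Qed.

Lemma Good_mul a b : Good a -> Good b -> Good (comm_mul a b).
Proof.
move=> [A1 [B1 [al1 [be1 [D1 C1]]]]] [A2 [B2 [al2 [be2 [D2 C2]]]]].
do 4 eexists; split; first exact: GoodData_comp D1 D2.
move=> x [Ax Ax'] [dx [_ dx']] /=.
rewrite C1 // in Ax' *; exact: C2.
Qed.

Lemma Good_equiv a b : Good a -> is_commensuration b -> comm_equiv a b -> Good b.
Proof.
move=> [A [B [al [be [D C]]]]] [[sDb _] [_ [hb _]]] [K [[sK [n hK]] HK]].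
exists A, B, al, be; split => // x Ax dbx.
case: D => [sA [sB [_ [_ [_ [_ [hal _]]]]]]].
have [j [/andP [j0 _] Kj]] := fi_pow x sK hK.
have [da [db E]] := HK _ Kj.
apply: (UR (n:=j)) => //.
by rewrite -(homX _ sA hal) // -(homX _ sDb hb) // -E C //; apply: subX.
Qed.

Lemma Good_inv a b : Good a -> is_commensuration b ->
  comm_equiv (comm_mul a b) (comm_id G) -> Good b.
Proof.
move=> [A [B [al [be [D C]]]]] [[sDb _] [_ [hb [injb _]]]] [K [[sK [n hK]] HK]].
exists B, A, be, al; split; first exact: GoodData_inv.
have hbe := GoodData_hom_be D.
case: D => [sA [sB [mA [mB [K1 [K2 [hal [dA _]]]]]]]].
move=> y By dby.
set w := pfun b y.
have [j [/andP [j0 _] Kj]] := fi_pow w sK hK.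
have [m [m0 [_ Am]]] := dA (gpow w j).
set z := gpow (gpow w j) m.
have Kz : K z := subX m sK Kj.
have [[daz [_ dbaz]] [_ Ez]] := HK _ Kz.
rewrite /= in Ez daz dbaz.
have dyj : pdom b (gpow y j) := subX j sDb dby.
have dy' : pdom b (gpow (gpow y j) m) := subX m sDb dyj.
have Ebz : pfun b (gpow (gpow y j) m) = z by rewrite !(homX _ sDb hb).
have Eaz : pfun a z = gpow (gpow y j) m by apply: injb => //; rewrite Ebz.
have Ealz : al z = gpow (gpow y j) m by rewrite C.
have : be (gpow (gpow y j) m) = z by rewrite -Ealz K1.
rewrite !(homX _ sB hbe) //; last exact: subX.
by apply: UR'.
Qed.

Lemma Good_generated S : (forall a, List.In a S -> Good a) ->
  forall c, comm_generated S c -> Good c.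
Proof.
move=> HS c; elim=> {c}.
- exact: HS.
- exact: Good_id.
- by move=> a b _ Ga _ Gb; apply: Good_mul.
- by move=> a b _ Ga cb E; apply: Good_inv E.
- by move=> a b _ Ga cb E; apply: Good_equiv E.
Qed.

End Main.

Section Final.
Variable G : group.
Variable p : nat.
Local Notation "x ** y" := (gmul x y) (at level 40, left associativity).
Local Notation iv := (@ginv G).
Local Notation e := (gone G).

Lemma dense_small (A : G -> Prop) n : prime p -> is_subgroup A -> has_index A n -> n < p ->
  dense p A.
Proof.
move=> pp sA hA np g; have [m [/andP [m0 mn] Am]] := fi_pow g sA hA.
exists m; split => //; split => //.
by rewrite coprime_sym prime_coprime // gtnNdvd // (leq_ltn_trans mn np).
Qed.

Lemma Good_base (a : Defs.pmap G) nd nc : prime p -> is_commensuration a ->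
  has_index (pdom a) nd -> nd < p -> has_index (pcod a) nc -> nc < p -> Good p a.
Proof.
move=> pp [[sD _] [[sC _] [ha [inja [mapa onto]]]]] hd ndp hc ncp.
have Hbe : forall y, {x | pcod a y -> pdom a x /\ pfun a x = y}.
  move=> y; apply: constructive_indefinite_description.
  case: (Classical_Prop.classic (pcod a y)) => [Hy | Hy].
    by have [x Hx] := onto y Hy; exists x.
  by exists e.
exists (pdom a), (pcod a), (pfun a), (fun y => sval (Hbe y)); split; last by [].
split => //; split => //; split => //.
split; first by move=> y /(proj2_sig (Hbe y)) [].
split.
  move=> x Dx; case: (proj2_sig (Hbe (pfun a x))); first exact: mapa.
  by move=> D2 E; apply: inja.
split; first by move=> y /(proj2_sig (Hbe y)) [].
split => //; split; [exact: dense_small sD hd ndp | exact: dense_small sC hc ncp].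
Qed.

Hypothesis UR : unique_root_property G.

Lemma extend (H : G -> Prop) (phi : G -> G) : is_normal H -> has_index H p ->
  is_aut_of_sub H phi -> Good p (PMap H H phi) ->
  exists psi, is_aut psi /\ forall x, H x -> psi x = phi x.
Proof.
move=> nH hH [mph [hph [injph onph]]] [A [B [al [be [D C]]]]].
have hbe := GoodData_hom_be D.
case: D => [sA [sB [mA [mB [K1 [K2 [hal [dA dB]]]]]]]].
rewrite /= in C.
have sH : is_subgroup H by case: nH.
have nH' : forall a h, H h -> H (iv a ** h ** a) by case: nH.
have dec : forall (A : G -> Prop) g, is_subgroup A -> dense p A ->
    exists a h, A a /\ H h /\ g = a ** h.
  move=> A' g sA' dA'; have [m [m0 [cop Am]]] := dA' g.
  exact: decomp sA' sH m0 cop Am (normal_pow g nH hH).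
have Hd : forall g, {ah : G * G | A ah.1 /\ H ah.2 /\ g = ah.1 ** ah.2}.
  move=> g; apply: constructive_indefinite_description.
  by have [a [h [Aa [Hh E]]]] := dec A g sA dA; exists (a, h).
pose psi g := al (sval (Hd g)).1 ** phi (sval (Hd g)).2.
have psi_spec : forall a h, A a -> H h -> psi (a ** h) = al a ** phi h.
  move=> a h Aa Hh; rewrite /psi.
  case: (Hd (a ** h)) => [[a' h']] /= [Aa' [Hh' E]].
  set z := iv a ** a'.
  have Ez : z = h ** iv h' by rewrite /z -(mulgK h' a') -E mulA mulKg.
  have Az : A z by apply: subM => //; apply: subV.
  have Hz : H z by rewrite Ez; apply: subM => //; apply: subV.
  have Ea' : a' = a ** z by rewrite /z mulKVg.
  have Eh : h = z ** h' by rewrite Ez mulgKV.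
  by rewrite {1}Ea' Eh hal // hph // (C z) // mulA.
have conjc : forall a h, A a -> H h -> phi (iv a ** h ** a) = iv (al a) ** phi h ** al a.
  move=> a h Aa Hh; have [m [m0 [_ Ahm]]] := dA h.
  have Ht : H (iv a ** h ** a) by apply: nH'.
  have Hhm : H (gpow h m) := subX m sH Hh.
  have At : A (iv a ** gpow h m ** a) by apply: subM => //; apply: subM => //; apply: subV.
  apply: (UR (n:=m)) => //.
  have Aia : A (iv a) := subV sA Aa.
  rewrite -(homX _ sH hph) // conj_pow -(C _ At); last by rewrite -conj_pow; apply: subX.
  rewrite conj_pow hal //; last exact: subM.
  rewrite hal // (homV sA hal) // (C _ Ahm Hhm) (homX _ sH hph) //.
have Hdec : forall g, exists a h, A a /\ H h /\ g = a ** h.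
  by move=> g; apply: dec.
have ext : forall x, H x -> psi x = phi x.
  move=> x Hx; have := psi_spec e x (sub1 sA) Hx.
  by rewrite mul1 (hom1 sA hal) mul1.
have hom : hom_on (fun _ => True) psi.
  move=> g1 g2 _ _.
  have [a1 [h1 [Aa1 [Hh1 ->]]]] := Hdec g1.
  have [a2 [h2 [Aa2 [Hh2 ->]]]] := Hdec g2.
  have E : a1 ** h1 ** (a2 ** h2) = (a1 ** a2) ** ((iv a2 ** h1 ** a2) ** h2).
    by rewrite -!mulA mulKVg.
  have Ht : H (iv a2 ** h1 ** a2) by apply: nH'.
  rewrite E psi_spec; [|by apply: subM|by apply: subM].
  by rewrite !psi_spec // hal // hph // conjc // -!mulA mulKVg.
have inj : injective psi.
  move=> g1 g2.
  have [a [h [Aa [Hh ->]]]] := Hdec g1.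
  have [a' [h' [Aa' [Hh' ->]]]] := Hdec g2.
  rewrite !psi_spec // => E.
  set z := iv a' ** a; set v := h' ** iv h.
  have Az : A z by apply: subM => //; apply: subV.
  have Hv : H v by apply: subM => //; apply: subV.
  have Ealz : al z = phi v.
    rewrite /z /v hal //; last by apply: subV.
    rewrite hph //; last by apply: subV.
    rewrite (homV sA hal) // (homV sH hph) //.
    apply: (mulIl (x:=al a')); rewrite mulKVg mulA -E mulgK //.
  have [m [m0 [_ Avm]]] := dA v.
  have Hvm : H (gpow v m) := subX m sH Hv.
  have Azm : A (gpow z m) := subX m sA Az.
  have : al (gpow v m) = al (gpow z m).
    by rewrite (C _ Avm Hvm) (homX _ sH hph Hv) (homX _ sA hal Az) Ealz.
  move/(congr1 be); rewrite !K1 // => Em.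
  have Ezv : z = v by apply: (UR (n:=m)).
  move: Ezv; rewrite /z /v => Ezv.
  by rewrite -(mulKVg a' a) Ezv -!mulA mulV mulr1.
have sur : forall y, exists x, psi x = y.
  move=> y; have [b [k [Bb [Hk ->]]]] := dec B y sB dB.
  have [h [Hh Eh]] := onph k Hk.
  by exists (be b ** h); rewrite psi_spec ?K2 ?Eh //; exact: mB.
by exists psi; split.
Qed.

End Final.

Lemma bound_list (G : group) (S : seq (Defs.pmap G)) :
  (forall a, List.In a S -> is_commensuration a) ->
  exists N, forall a, List.In a S -> exists nd nc, nd < N /\ nc < N /\
    has_index (pdom a) nd /\ has_index (pcod a) nc.
Proof.
elim: S => [|a S IH] HS; first by exists 0.
have [N HN] := IH (fun b Hb => HS b (or_intror Hb)).
have [[_ [nd hd]] [[_ [nc hc]] _]] := HS a (or_introl erefl).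
exists (nd + nc + N).+1 => b [<-|Hb].
  exists nd, nc; split; first lia.
  by split => //; lia.
have [nd' [nc' [h1 [h2 h3]]]] := HN b Hb.
exists nd', nc'; split; first lia.
by split => //; lia.
Qed.

Theorem theorem2p7 (G : group) :
  unique_root_property G ->
  (forall N : nat, exists p : nat, N <= p /\ prime p /\
     exists H : G -> Prop, is_normal H /\ has_index H p /\
       exists phi : G -> G, is_aut_of_sub H phi /\
         ~ (exists psi : G -> G, is_aut psi /\ forall x, H x -> psi x = phi x)) ->
  ~ comm_finitely_generated G.
Proof.
move=> UR Hyp [S [Scomm Sgen]].
have [N HN] := bound_list Scomm.
have [p [Np [pp [H [nH [hH [phi [aut noext]]]]]]]] := Hyp N.
apply: noext; apply: (extend UR nH hH aut).
apply: (@Good_generated G p UR S).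
  move=> a Ha; have [nd [nc [h1 [h2 [h3 h4]]]]] := HN a Ha.
  apply: (Good_base pp (Scomm a Ha) h3 _ h4); exact: leq_trans Np.
apply: Sgen.
have sH : is_subgroup H by case: nH.
case: aut => [m [h [i o]]].
split; first by split => //; exists p.
split; first by split => //; exists p.
by do 3 (split => //).
Qed.
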